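(* For every $\varepsilon>0$ there exist instances of Maximum Vertex Coverage in which the graph is bipartite and has a vertex cover of size $k$ (so the optimum covers all edges), but the greedy algorithm's output covers at most a $\left(1-\frac1e+\varepsilon\right)$ fraction of the edges.
   Context: Maximum Vertex Coverage: given a graph $G$ and a positive integer $k$, choose $k$ vertices so as to maximize the number of edges having at least one endpoint among the chosen vertices. (This is the special case of Maximum Coverage in which each element belongs to exactly two sets.) The greedy algorithm chooses $k$ vertices sequentially, each new vertex maximizing the number of edges it covers that are not yet covered by previously chosen vertices. *)

(* Defs.v *)
From mathcomp Require Import all_boot.
Set Implicit Arguments. Unset Strict Implicit. Unset Printing Implicit Defensive.

Section Graphs.
Variable T : finType.

Definition simple_graph (e : rel T) : Prop := symmetric e /\ irreflexive e.

Definition edges (e : rel T) : {set {set T}} :=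
  [set [set x; y] | x in T, y in T & e x y].

Definition covered (e : rel T) (S : {set T}) : {set {set T}} :=
  [set f in edges e | [exists v in S, v \in f]].

Definition bipartite (e : rel T) : Prop :=
  exists A : {set T}, forall x y, e x y -> (x \in A) != (y \in A).

Definition vertex_cover (e : rel T) (C : {set T}) : Prop :=
  covered e C = edges e.

Definition gain (e : rel T) (P : seq T) (v : T) : nat :=
  #|covered e [set x in v :: P]| - #|covered e [set x in P]|.

(* s (in order of selection) is a possible run of the greedy algorithm:
   each chosen vertex is new and maximizes the number of newly covered edges
   among all vertices not chosen so far (ties broken arbitrarily). *)
Definition greedy_run (e : rel T) (k : nat) (s : seq T) : Prop :=
  size s = k /\ uniq s /\
  forall i, i < k -> forall v : T, v \notin take i s ->
    gain e (take i s) v <= gain e (take i s) (nth v s i).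

End Graphs.

(* Main.v *)
Require Import Defs.
From mathcomp Require Import all_boot.
From Stdlib Require Import Reals.
From Stdlib Require Import Lra Lia.
From mathcomp Require Import zify.
Set Implicit Arguments. Unset Strict Implicit. Unset Printing Implicit Defensive.

Module RealPart.
Local Open Scope R_scope.

Lemma exp_pow' x n : exp x ^ n = exp (INR n * x).
Proof.
induction n as [|n IH]; simpl; [now rewrite Rmult_0_l exp_0| ].
rewrite IH -exp_plus; f_equal. destruct n; simpl; ring.
Qed.

Lemma pow_bound n : (1 <= n)%nat -> / exp 1 <= (1 - / INR (S n)) ^ n.
Proof.
intros Hn.
assert (Hn0 : 0 < INR n) by (apply lt_0_INR; lia).
assert (HS : INR (S n) = INR n + 1) by (rewrite S_INR; ring).
assert (Ha : 1 - / INR (S n) = / (1 + / INR n)).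
{ rewrite HS; field; lra. }
rewrite Ha pow_inv.
apply Rinv_le_contravar.
- apply pow_lt. assert (0 < / INR n) by (apply Rinv_0_lt_compat; lra). lra.
- replace (exp 1) with (exp (/ INR n) ^ n).
  + apply pow_incr. split.
    * assert (0 < / INR n) by (apply Rinv_0_lt_compat; lra). lra.
    * left. apply exp_ineq1. apply Rgt_not_eq, Rinv_0_lt_compat; lra.
  + rewrite exp_pow'. f_equal. field. lra.
Qed.

Lemma step_real (kk X X' d K aj j : R) :
  1 <= kk -> kk * d <= X + kk -> X = X' + d ->
  K * aj - j <= X -> 0 <= j ->
  K * (aj * (1 - / kk)) - (j + 1) <= X'.
Proof.
intros Hk Hd HX IH Hj.
assert (Hi : 0 < / kk) by (apply Rinv_0_lt_compat; lra).
assert (Hki : kk * / kk = 1) by (field; lra).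
assert (Hi1 : / kk <= 1).
{ rewrite -Rinv_1. apply Rinv_le_contravar; lra. }
assert (Hd' : d <= (X + kk) * / kk).
{ apply Rmult_le_reg_l with kk; [lra| ]. rewrite -Rmult_assoc (Rmult_comm kk (X + kk)) Rmult_assoc Hki. lra. }
assert (H1 : (K * aj - j) * (1 - / kk) <= X * (1 - / kk)).
{ apply Rmult_le_compat_r; lra. }
assert (H2 : j * (1 - / kk) <= j) by nra.
assert (H3 : (X + kk) * / kk = X * / kk + 1) by (field; lra).
nra.
Qed.

Lemma final_real kk X P Ed aN ie eps :
  1 <= kk -> 2 < eps * kk -> 0 < ie <= 1 -> ie <= aN ->
  P = kk * kk - X -> kk * kk * ((1 - / kk) * aN) - kk <= X -> kk * kk <= Ed -> 0 <= eps ->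
  P <= (1 - ie + eps) * Ed.
Proof.
intros Hk He Hie HaN HP HX HEd Heps.
assert (Hq : kk * kk * ((1 - / kk) * aN) = (kk * kk - kk) * aN) by (field; lra).
rewrite Hq in HX.
assert (H1 : (kk * kk - kk) * ie <= (kk * kk - kk) * aN) by (apply Rmult_le_compat_l; nra).
assert (H2 : kk * ie <= kk) by nra.
assert (H3 : 2 * kk <= eps * kk * kk) by nra.
assert (H4 : (1 - ie + eps) * (kk * kk) <= (1 - ie + eps) * Ed) by (apply Rmult_le_compat_l; lra).
nra.
Qed.

End RealPart.
Import RealPart.
Lemma edgesP (T : finType) (e : rel T) f :
  reflect (exists x y, [/\ e x y & f = [set x; y]]) (f \in edges e).
Proof.
apply: (iffP imset2P) => [[x y _]|[x [y [exy ->]]]].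
  by rewrite inE /= => exy ->; exists x, y.
by apply: (Imset2spec (x1:=x) (x2:=y)); rewrite ?inE.
Qed.

Lemma gainE (T : finType) (e : rel T) (P : seq T) v :
  symmetric e -> irreflexive e -> v \notin P ->
  gain e P v = #|[set u | e v u & u \notin P]|.
Proof.
move=> esym eirr vP.
set U := [set u | e v u & u \notin P].
set N := [set [set v; u] | u in U].
have covE : covered e [set x in v :: P] = covered e [set x in P] :|: N.
  apply/setP => f; rewrite !inE.
  apply/idP/idP.
    case/andP=> fE /existsP[w /andP[]]; rewrite inE in_cons => /orP[/eqP->|wP] wf.
      rewrite fE /=; case: existsP => [_|nw]; first by []. rewrite /=.
      case/edgesP: fE nw wf => x [y [exy ->]] nw.
      rewrite !inE => /orP[]/eqP vE.
        apply/imsetP; exists y; last by rewrite vE.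
        rewrite !inE vE exy /=.
        by apply/negP => yP; apply: nw; exists y; rewrite !inE yP eqxx orbT.
      apply/imsetP; exists x; last by rewrite vE setUC.
      rewrite !inE vE esym exy /=.
      by apply/negP => xP; apply: nw; exists x; rewrite !inE xP eqxx.
    by rewrite fE /=; apply/orP; left; apply/existsP; exists w; rewrite !inE wP wf.
  case/orP=> [/andP[-> /existsP[w /andP[]]]|/imsetP[u]].
    by rewrite !inE => wP wf; apply/existsP; exists w; rewrite !inE wP orbT wf.
  rewrite !inE => /andP[evu uP] ->; apply/andP; split.
    by apply/edgesP; exists v, u.
  by apply/existsP; exists v; rewrite !inE !eqxx.
have dis : covered e [set x in P] :&: N = set0.
  apply/setP => f; rewrite !inE; apply/negP => /andP[/andP[_ /existsP[w /andP[]]]].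
  rewrite !inE => wP wf /imsetP[u]; rewrite !inE => /andP[_ uP] fE.
  move: wf; rewrite fE !inE => /orP[]/eqP wE; [by rewrite -wE wP in vP|by rewrite -wE wP in uP].
rewrite /gain covE cardsU dis cards0 subn0 addKn.
rewrite card_in_imset //.
move=> x y; rewrite !inE => /andP[evx _] /andP[evy _] E.
have : x \in [set v; y] by rewrite -E !inE eqxx orbT.
rewrite !inE => /orP[]/eqP xE; last by [].
by rewrite xE eirr in evx.
Qed.

Fixpoint Ps (k j : nat) : nat := if j is j'.+1 then Ps k j' + (k - Ps k j' %/ k) else 0.
Definition dd k j := k - Ps k j %/ k.

Lemma PsS k j : Ps k j.+1 = Ps k j + dd k j. Proof. by []. Qed.

Lemma dd_le k j : dd k j <= k. Proof. exact: leq_subr. Qed.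

Lemma divdec k P : 0 < k -> P <= k * k ->
  exists q r, [/\ P = q * k + r, r < k, q <= k & P %/ k = q].
Proof.
move=> k0 hP; exists (P %/ k), (P %% k); split => //.
- exact: divn_eq.
- exact: ltn_pmod.
- by rewrite (leq_trans (leq_div2r k hP)) // mulnK.
Qed.

Lemma Ps_le k j : 0 < k -> Ps k j <= k * k.
Proof.
move=> k0; elim: j => [|j IH] //=.
have [q [r [E rk qk ->]]] := divdec k0 IH.
rewrite E; nia.
Qed.

Lemma Ps_ge k j : 0 < k -> minn j (k * k) <= Ps k j.
Proof.
move=> k0; elim: j => [|j IH]; first by rewrite min0n.
rewrite PsS /dd.
have [q [r [E rk qk ->]]] := divdec k0 (Ps_le j k0).
move: IH; rewrite E; nia.
Qed.

Lemma key_ineq k j : 0 < k -> k * dd k j <= (k * k - Ps k j) + k.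
Proof.
move=> k0; rewrite /dd.
have [q [r [E rk qk ->]]] := divdec k0 (Ps_le j k0).
rewrite E; nia.
Qed.

Lemma Ps_mono k j l : j <= l -> Ps k j <= Ps k l.
Proof. elim: l => [|l IH]; first by rewrite leqn0 => /eqP->. 
rewrite leq_eqVlt => /orP[/eqP->//|]; rewrite ltnS => /IH; rewrite PsS; lia. Qed.

Lemma dd_anti k j l : j <= l -> dd k l <= dd k j.
Proof. move=> /(Ps_mono k) h; rewrite /dd; have := leq_div2r k h; lia. Qed.

Lemma mod_inj k a d p q : d <= k -> a <= p < a + d -> a <= q < a + d -> p %% k = q %% k -> p = q.
Proof.
move=> dk /andP[h1 h2] /andP[h3 h4] E.
case: (posnP k) => [k0|k0]; first by move: dk; rewrite k0 leqn0 => /eqP d0; lia.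
have := divn_eq p k; have := divn_eq q k; rewrite E.
have := ltn_pmod q k0.
move: (q %% k) (p %/ k) (q %/ k) => r a1 b1 rk Eq Ep.
have : a1 = b1 by nia.
lia.
Qed.

Lemma Ps_uniq k l l' p : Ps k l <= p < Ps k l.+1 -> Ps k l' <= p < Ps k l'.+1 -> l = l'.
Proof.
move=> /andP[h1 h2] /andP[h3 h4].
case: (ltngtP l l') => // H.
  by have := Ps_mono k H; lia.
by have := Ps_mono k H; lia.
Qed.

Lemma cov_cons (T : finType) (e : rel T) P v :
  #|covered e [set x in v :: P]| = #|covered e [set x in P]| + gain e P v.
Proof.
rewrite /gain subnKC //; apply: subset_leq_card; apply/subsetP => f.
rewrite !inE => /andP[-> /existsP[w /andP[wP wf]]].
by apply/existsP; exists w; rewrite !inE wf; rewrite inE in wP; rewrite wP orbT.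
Qed.

Section Construction.
Variable n : nat.
Local Notation k := n.+1.
Local Notation M := (k * k).+1.
Definition VT := ('I_k + 'I_M)%type.
Definition adj (i : 'I_k) (l : nat) : bool :=
  has (fun p => p %% k == i) (iota (Ps k l) (dd k l)).
Definition E : rel VT := fun u v =>
  match u, v with
  | inl i, inr l => adj i l
  | inr l, inl i => adj i l
  | _, _ => false
  end.
Definition gv (j : nat) : VT := inr (inord j).

Lemma E_sym : symmetric E. Proof. by case=> [i|l] [i'|l']. Qed.
Lemma E_irr : irreflexive E. Proof. by case. Qed.

Lemma deg_g (l : nat) : #|[set i : 'I_k | adj i l]| = dd k l.
Proof.
set s := map (fun p => inord (p %% k) : 'I_k) (iota (Ps k l) (dd k l)).
have -> : [set i : 'I_k | adj i l] = [set i in s].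
  apply/setP => i; rewrite !inE; apply/hasP/mapP => [[p pI /eqP pi]|[p pI ->]].
    by exists p => //; apply: val_inj; rewrite /= inordK ?ltn_mod // pi.
  by exists p => //; rewrite inordK ?ltn_mod.
rewrite cardsE.
have /card_uniqP -> : uniq s; last by rewrite size_map size_iota.
rewrite map_inj_in_uniq ?iota_uniq // => p q; rewrite !mem_iota => hp hq.
move/(congr1 val); rewrite /= !inordK ?ltn_mod // => pq.
exact: (mod_inj (dd_le k l) hp hq pq).
Qed.

Lemma nbr_g (l : 'I_M) (P : seq VT) : (forall i, inl i \notin P) ->
  #|[set u | E (inr l) u & u \notin P]| = dd k l.
Proof.
move=> hP; rewrite -deg_g -(card_imset _ (@inl_inj 'I_k 'I_M)).
apply: eq_card => -[i|l']; rewrite !inE.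
  rewrite hP andbT; apply/idP/imsetP => [h|[i' ]]; first by exists i; rewrite ?inE.
  by rewrite inE => h [->].
rewrite andFb; apply/esym/imsetP => [[i' _]] //.
Qed.

Lemma card_ge (a : nat) : a <= k -> #|[set t : 'I_k | a <= t]| <= k - a.
Proof.
move=> ak; have := cardsC [set t : 'I_k | a <= t]; rewrite card_ord.
have : a <= #|~: [set t : 'I_k | a <= t]|.
  have E1 : #|[set widen_ord ak x | x : 'I_a]| = a.
    by rewrite card_imset ?card_ord // => x y /(congr1 val) /= /val_inj.
  rewrite -{1}E1; apply: subset_leq_card; apply/subsetP => _ /imsetP[x _ ->].
  by rewrite !inE -ltnNge /=.
lia.
Qed.

Lemma res_c (i : 'I_k) (j : nat) (P : seq VT) :
  (forall l : 'I_M, inr l \notin P -> j <= l) ->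
  #|[set u | E (inl i) u & u \notin P]| <= dd k j.
Proof.
move=> hP.
set S := [set l : 'I_M | adj i l & j <= l].
have h1 : #|[set u | E (inl i) u & u \notin P]| <= #|S|.
  rewrite -(card_imset _ (@inr_inj 'I_k 'I_M)).
  apply: subset_leq_card; apply/subsetP => [[i'|l]]; rewrite !inE //.
  by move=> /andP[a b]; apply/imsetP; exists l => //; rewrite !inE; apply/andP; split; [exact: a | exact: hP].
set h := fun t : 'I_k => odflt ord0 [pick l : 'I_M | Ps k l <= t * k + i < Ps k l.+1].
set A := [set t : 'I_k | Ps k j %/ k <= t].
have h2 : S \subset h @: A.
  apply/subsetP => l; rewrite !inE => /andP[/hasP[p]]; rewrite mem_iota -PsS => pI /eqP pi jl.
  have pk : p < k * k by have := Ps_le l.+1 (ltn0Sn n); lia.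
  have pk' : p %/ k < k by rewrite ltn_divLR.
  apply/imsetP; exists (inord (p %/ k)).
    rewrite inE inordK //; apply: leq_div2r.
    by have := Ps_mono k jl; lia.
  rewrite /h inordK // -pi -divn_eq.
  case: pickP => [l' /= l'I|/(_ l) /=]; last by rewrite pI.
  by apply: val_inj; exact: (Ps_uniq pI l'I).
apply: (leq_trans h1); apply: (leq_trans (subset_leq_card h2)).
apply: (leq_trans (leq_imset_card _ _)); rewrite /dd.
apply: card_ge.
by rewrite (leq_trans (leq_div2r k (Ps_le j (ltn0Sn n)))) // mulnK.
Qed.

Lemma mem_gv (l : 'I_M) j : j <= M -> (inr l \in mkseq gv j) = (l < j).
Proof.
move=> jM; apply/mapP/idP => [[x]|lj].
  rewrite mem_iota /= => xj [->]; rewrite inordK //; lia.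
by exists (val l); rewrite ?mem_iota //= /gv inord_val.
Qed.

Lemma mem_gv_l (i : 'I_k) j : (inl i \in mkseq gv j) = false.
Proof. by apply/mapP => [[x _]]. Qed.

Lemma cov_g j : j <= M -> #|covered E [set x in mkseq gv j]| = Ps k j.
Proof.
elim: j => [|j IH] jM.
  rewrite /=; apply/eqP; rewrite cards_eq0; apply/eqP/setP => f; rewrite !inE.
  by apply/negP => /andP[_ /existsP[w]]; rewrite inE.
have -> : [set x in mkseq gv j.+1] = [set x in gv j :: mkseq gv j].
  by apply/setP => x; rewrite mkseqS !inE mem_rcons in_cons.
have giP : gv j \notin mkseq gv j by rewrite /gv mem_gv ?(ltnW jM) // (inordK jM) ltnn.
rewrite cov_cons IH 1?ltnW // PsS (gainE E_sym E_irr giP).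
rewrite /gv nbr_g ?inordK //; by move=> i; rewrite mem_gv_l.
Qed.

Definition Cset : {set VT} := [set u : VT | if u is inl _ then true else false].

Lemma card_C : #|Cset| = k.
Proof.
have -> : Cset = inl @: [set: 'I_k].
  apply/setP => -[i|l]; rewrite !inE.
    by apply/esym/imsetP; exists i.
  by apply/esym/imsetP => -[].
by rewrite card_imset ?cardsT ?card_ord //; exact: inl_inj.
Qed.

Lemma cover_C : vertex_cover E Cset.
Proof.
apply/setP => f; rewrite inE; apply/andb_idr => /edgesP[x [y [exy ->]]].
apply/existsP; case: x y exy => [i|l] [i'|l'] //= _.
  by exists (inl i); rewrite !inE eqxx.
by exists (inl i'); rewrite !inE eqxx orbT.
Qed.

Lemma bip : bipartite E.
Proof. by exists Cset => -[i|l] [i'|l']; rewrite !inE. Qed.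

Lemma take_gv i : i <= k -> take i (mkseq gv k) = mkseq gv i.
Proof. by move=> ik; rewrite /mkseq -map_take take_iota (minn_idPl ik). Qed.

Lemma greedy : greedy_run E k (mkseq gv k).
Proof.
have kM : k <= M by nia.
split; first by rewrite size_mkseq.
split.
  apply/mkseq_uniqP => x y; rewrite !inE => xk yk [].
  by move/(congr1 val); rewrite /= !inordK //; lia.
move=> i ik v; rewrite (take_gv (ltnW ik)) (nth_mkseq _ _ ik) => vP.
have iM : i < M by lia.
have iM' : i <= M by lia.
have giP : gv i \notin mkseq gv i by rewrite /gv (mem_gv _ iM') (inordK iM) ltnn.
rewrite (gainE E_sym E_irr giP) /gv nbr_g ?(inordK iM); last by move=> x; rewrite mem_gv_l.
rewrite (gainE E_sym E_irr vP).
case: v vP => [x|l] vP.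
  apply: res_c => l; rewrite (mem_gv _ iM'); lia.
rewrite nbr_g; last by move=> x; rewrite mem_gv_l.
apply: dd_anti; move: vP; rewrite (mem_gv _ iM'); lia.
Qed.

Lemma edges_ge : k * k <= #|edges E|.
Proof.
have := Ps_ge M (ltn0Sn n); rewrite (minn_idPr (leqnSn _)).
move=> h; apply: (leq_trans h); rewrite -cov_g //.
by apply: subset_leq_card; apply/subsetP => f; rewrite inE => /andP[].
Qed.

Lemma greedy_cov : #|covered E [set x in mkseq gv k]| = Ps k k.
Proof. by rewrite cov_g //; nia. Qed.
End Construction.

Lemma xrec n j :
  (INR (n.+1 * n.+1) * (1 - / INR n.+1) ^ j - INR j <= INR (n.+1 * n.+1 - Ps n.+1 j))%R.
Proof.
elim: j => [|j IH].
  by change (Ps n.+1 0) with 0%N; rewrite subn0 /=; lra.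
have k0 : 0 < n.+1 by [].
have hle := Ps_le j.+1 k0.
have hkey := key_ineq j k0.
have hX : n.+1 * n.+1 - Ps n.+1 j = (n.+1 * n.+1 - Ps n.+1 j.+1) + dd n.+1 j.
  by move: hle; rewrite PsS; lia.
have hkeyR : (INR n.+1 * INR (dd n.+1 j) <= INR (n.+1 * n.+1 - Ps n.+1 j) + INR n.+1)%R.
  rewrite -mult_INR -plus_INR; apply: le_INR; apply/leP; exact: hkey.
have hXR : (INR (n.+1 * n.+1 - Ps n.+1 j) = INR (n.+1 * n.+1 - Ps n.+1 j.+1) + INR (dd n.+1 j))%R.
  by rewrite hX plus_INR.
have hk1 : (1 <= INR n.+1)%R by apply: (le_INR 1); apply/leP.
have hpow : ((1 - / INR n.+1) ^ j.+1 = (1 - / INR n.+1) ^ j * (1 - / INR n.+1))%R by simpl; ring.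
rewrite hpow (S_INR j); exact: (step_real hk1 hkeyR hXR IH (pos_INR j)).
Qed.

Theorem lemma5p1 :
  forall eps : R, (0 < eps)%R ->
  exists (T : finType) (e : rel T) (k : nat),
    simple_graph e /\ bipartite e /\
    0 < #|edges e| /\
    (exists C : {set T}, #|C| = k /\ vertex_cover e C) /\
    exists s : seq T, greedy_run e k s /\
      (INR #|covered e [set x in s]| <=
         (1 - / exp 1 + eps) * INR #|edges e|)%R.
Proof.
move=> eps Heps.
have [N [HN HN0]] := archimed_cor1 (eps / 2) ltac:(lra).
exists (VT N), (@E N), N.+1.
split; first by split; [exact: E_sym | exact: E_irr].
split; first exact: bip.
split; first by apply: leq_trans (edges_ge N); rewrite muln_gt0.
split; first by exists (Cset N); split; [exact: card_C | exact: cover_C].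
exists (mkseq (@gv N) N.+1); split; first exact: greedy.
rewrite greedy_cov.
have hk1 : (1 <= INR N.+1)%R by apply: (le_INR 1); apply/leP.
have hN1 : (1 <= N)%N by apply/leP.
have hINR : (0 < INR N)%R by apply: lt_0_INR; apply/ltP.
have heps : (2 < eps * INR N.+1)%R.
  rewrite S_INR.
  have : (/ INR N * INR N = 1)%R by field; lra.
  nra.
have hie : (0 < / exp 1 <= 1)%R.
  have he : (1 + 1 < exp 1)%R by apply: exp_ineq1; lra.
  split; first by apply: Rinv_0_lt_compat; lra.
  by rewrite -[X in (_ <= X)%R]Rinv_1; apply: Rinv_le_contravar; lra.
have haN := pow_bound hN1.
have hP : INR (Ps N.+1 N.+1) = (INR N.+1 * INR N.+1 - INR (N.+1 * N.+1 - Ps N.+1 N.+1))%R.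
  rewrite minus_INR ?mult_INR; first by ring.
  by apply/leP; exact: Ps_le.
have hX := xrec N N.+1.
have hpow : ((1 - / INR N.+1) ^ N.+1 = (1 - / INR N.+1) * (1 - / INR N.+1) ^ N)%R by [].
rewrite mult_INR hpow in hX.
have hEd : (INR N.+1 * INR N.+1 <= INR #|edges (@E N)|)%R.
  by rewrite -mult_INR; apply: le_INR; apply/leP; exact: edges_ge.
exact: (final_real hk1 heps hie haN hP hX hEd (Rlt_le _ _ Heps)).
Qed.
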